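(* Under the role-persistence and uniform-bound assumptions below, with $\mathbf M_t=\mathbf A_t\mathbf W_t$, $$\sup_{t\in\mathbb N}\|\mathbf A_{t+1}\mathbf W_{t+1}\mathbf A_t\mathbf W_t\|\le\bar\alpha<1.$$
   Context: Fix a finite node set $\mathcal V$ with $n=|\mathcal V|$ and a sequence of directed graphs $G_t=(\mathcal V,\mathcal E_t)$, $t\in\mathbb N$. In $G_t$, a node $i$ is a pure obligee if it has no outgoing edge in $\mathcal E_t$, and a principal otherwise. For each $t$, $\mathbf W_t=(w^t_{ij})$ is an entrywise nonnegative $n\times n$ matrix with $w^t_{ij}>0$ only if $(j,i)\in\mathcal E_t$ and with every row sum at most $1$; $\mathbf A_t=\mathrm{diag}(\alpha_i^t)$ with $\alpha_i^t\in[0,1]$, and $\alpha_i^t=1$ whenever $i$ is a pure obligee in $G_t$. Role persistence: for every $i$ and $t$, $i$ is a pure obligee in $G_t$ if and only if it is a pure obligee in $G_{t+1}$ (pure obligees stay pure obligees and principals stay principals). Uniform bound: there is $\bar\alpha\in(0,1)$ such that $\alpha_i^t\le\bar\alpha$ for every $t$ and every node $i$ that is not a pure obligee in $G_t$. $\|\mathbf M\|$ is the induced $\ell_\infty$ matrix norm (maximum absolute row sum). *)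

(* Defs.v *)
From mathcomp Require Import all_boot all_order all_algebra.
Set Implicit Arguments. Unset Strict Implicit. Unset Printing Implicit Defensive.
Import Order.TTheory GRing.Theory Num.Theory.
Local Open Scope ring_scope.

(* Node set V = 'I_n.  A time-indexed directed graph is E : nat -> rel 'I_n,
   where E t j i means (j,i) is an edge of G_t (from j to i). *)
Definition pure_obligee (n : nat) (E : nat -> rel 'I_n) (t : nat) (i : 'I_n) : Prop :=
  forall j : 'I_n, ~~ E t i j.

(* Induced l_infinity matrix norm: maximum absolute row sum. *)
Definition infnorm (R : realFieldType) (m k : nat) (M : 'M[R]_(m, k)) : R :=
  \big[Num.max/0]_(i < m) \sum_(j < k) `|M i j|.

Definition diagA (R : realFieldType) (n : nat) (alpha : 'I_n -> R) : 'M[R]_n :=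
  diag_mx (\row_i alpha i).

(* Main.v *)
Require Import Defs.
From mathcomp Require Import all_boot all_order all_algebra.
Import Order.TTheory GRing.Theory Num.Theory.
Local Open Scope ring_scope.

Theorem mainTheorem13 (R : realFieldType) (n : nat)
  (E : nat -> rel 'I_n) (W : nat -> 'M[R]_n) (alpha : nat -> 'I_n -> R)
  (abar : R) :
  (* W_t entrywise nonnegative, supported on edges, row sums at most 1 *)
  (forall t i j, 0 <= W t i j) ->
  (forall t i j, 0 < W t i j -> E t j i) ->
  (forall t i, \sum_(j < n) W t i j <= 1) ->
  (* alpha_i^t in [0,1], equal to 1 at pure obligees *)
  (forall t i, 0 <= alpha t i <= 1) ->
  (forall t i, pure_obligee E t i -> alpha t i = 1) ->
  (* role persistence *)
  (forall t i, pure_obligee E t i <-> pure_obligee E t.+1 i) ->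
  (* uniform bound *)
  0 < abar -> abar < 1 ->
  (forall t i, ~ pure_obligee E t i -> alpha t i <= abar) ->
  (* sup_t ||A_{t+1} W_{t+1} A_t W_t|| <= abar < 1 *)
  (forall t : nat,
     infnorm (diagA (alpha t.+1) *m W t.+1 *m (diagA (alpha t) *m W t)) <= abar)
  /\ abar < 1.
Proof.
move=> W0 WE Ws Ar Ap Per ab0 ab1 Ab; split=> // t.
have ab0' : 0 <= abar := ltW ab0.
rewrite /infnorm; elim/big_ind: _ => //.
  by move=> x y hx hy; rewrite ge_max hx hy.
move=> i _.
have term : forall k j, 0 <= alpha t.+1 i * W t.+1 i k * (alpha t k * W t k j).
  move=> k j; case/andP: (Ar t.+1 i) => a1 _; case/andP: (Ar t k) => a2 _.
  by rewrite !mulr_ge0.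
have E1 : forall j, (diagA (alpha t.+1) *m W t.+1 *m (diagA (alpha t) *m W t)) i j
    = \sum_k alpha t.+1 i * W t.+1 i k * (alpha t k * W t k j).
  move=> j; rewrite mxE; apply: eq_bigr => k _.
  by rewrite /diagA !mul_diag_mx !mxE.
under eq_bigr => j _ do rewrite E1 ger0_norm ?sumr_ge0 //.
rewrite exchange_big /=.
apply: (@le_trans _ _ (\sum_k W t.+1 i k * abar)); last first.
  by rewrite -mulr_suml ler_piMl.
apply: ler_sum => k _.
rewrite -mulr_sumr -mulr_sumr.
have [Wz|Wp] := eqVneq (W t.+1 i k) 0.
  by rewrite Wz !mul0r mulr0 !mul0r.
have Wpos : 0 < W t.+1 i k by rewrite lt_def Wp W0.
have Ek := WE _ _ _ Wpos.
have np : ~ pure_obligee E t k.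
  by move=> /(Per t k) H; move: (H i); rewrite Ek.
have ak := Ab t k np.
case/andP: (Ar t.+1 i) => a1 a1'; case/andP: (Ar t k) => a2 _.
have s0 : 0 <= \sum_j W t k j by apply: sumr_ge0.
rewrite -mulrA mulrC -mulrA mulrC [W _ _ _ * abar]mulrC.
rewrite ler_wpM2r ?W0 //.
apply: le_trans ak.
apply: (@le_trans _ _ (alpha t k * \sum_j W t k j)).
  by rewrite ler_piMr ?mulr_ge0.
by rewrite ler_piMr ?Ws.
Qed.
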